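(* Let $\psi:X\to Y$ be a function between two finite metric spaces such that $\psi(X)$ is $D$-dense in $Y$ for some $D\geq0$. Let $B\subseteq Y$ be nonempty. Then $$|\psi^{-1}(B)|\geq|B|\cdot\frac{1}{N_Y(D)}\cdot\left(1-\frac{|\partial^{\rm in}_D(B)|}{|B|}\right).$$
   Context: A subset $S\subseteq Y$ is $D$-dense if every point of $Y$ is within distance $D$ of a point of $S$. $N_Y(D)=\sup_{y\in Y}|B(y,D)|$, where $B(y,D)$ is the closed ball. The inner $D$-boundary of $B\subseteq Y$ is $\partial^{\rm in}_D(B)=\{y\in B: d(y,Y\setminus B)\leq D\}$. *)

(* Defs.v *)
From HB Require Import structures.
From mathcomp Require Import all_boot all_order all_algebra.
Set Implicit Arguments. Unset Strict Implicit. Unset Printing Implicit Defensive.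
Import Order.TTheory GRing.Theory Num.Theory.
Local Open Scope ring_scope.

Definition is_metric (R : realFieldType) (T : finType) (d : T -> T -> R) : Prop :=
  [/\ forall x y, 0 <= d x y,
      forall x y, (d x y == 0) = (x == y),
      forall x y, d x y = d y x &
      forall x y z, d x z <= d x y + d y z].

Definition dense_in (R : realFieldType) (Y : finType) (d : Y -> Y -> R)
  (S : {set Y}) (D : R) : Prop :=
  forall y : Y, exists2 s, s \in S & d y s <= D.

Definition cball (R : realFieldType) (Y : finType) (d : Y -> Y -> R)
  (y : Y) (D : R) : {set Y} := [set z | d y z <= D].

(* N_Y(D) = sup_y |B(y,D)| (a max, since Y is finite; 0 if Y is empty) *)
Definition NY (R : realFieldType) (Y : finType) (d : Y -> Y -> R) (D : R) : nat :=
  \max_(y : Y) #|cball d y D|.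

(* inner D-boundary: y in B with d(y, Y \ B) <= D; since Y is finite the
   infimum is attained (and is +oo when Y \ B is empty) *)
Definition inner_boundary (R : realFieldType) (Y : finType) (d : Y -> Y -> R)
  (D : R) (B : {set Y}) : {set Y} :=
  [set y in B | [exists z in ~: B, d y z <= D]].

(* Main.v *)
Require Import Defs.
From HB Require Import structures.
From mathcomp Require Import all_boot all_order all_algebra.
From mathcomp Require Import ring.
Import Order.TTheory GRing.Theory Num.Theory.
Local Open Scope ring_scope.

Lemma card_bigcup_le (T I : finType) (A : {set I}) (F : I -> {set T}) :
  (#|\bigcup_(i in A) F i| <= \sum_(i in A) #|F i|)%N.
Proof.
elim/big_rec2: _ => [|i S n _ IH]; first by rewrite cards0.
apply: leq_trans (leq_card_setU _ _) _; by rewrite leq_add2l.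
Qed.

Lemma count_part (R : realFieldType) (X Y : finType)
  (dY : Y -> Y -> R) (hY : is_metric dY)
  (psi : X -> Y) (D : R)
  (hdense : dense_in dY (psi @: [set: X]) D)
  (B : {set Y}) :
  (#|B :\: inner_boundary dY D B| <= #|psi @^-1: B| * NY dY D)%N.
Proof.
case: hY => _ _ hsym _.
have sub : B :\: inner_boundary dY D B \subset
   \bigcup_(x in psi @^-1: B) cball dY (psi x) D.
  apply/subsetP => y; rewrite !inE negb_and => /andP[/orP[/negP nB|nE] yB].
    by [].
  have [s /imsetP[x _ ->] hd] := hdense y.
  apply/bigcupP; exists x; last by rewrite inE hsym.
  rewrite inE; apply: contraNT nE => pxB.
  by apply/existsP; exists (psi x); rewrite inE pxB hd.
apply: (leq_trans (subset_leq_card sub)).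
apply: (leq_trans (card_bigcup_le _ _ _ _)).
rewrite -sum_nat_const; apply: leq_sum => x _.
rewrite /NY; exact: (@leq_bigmax _ (fun y : Y => #|cball dY y D|) (psi x)).
Qed.

Theorem lemma3p16 (R : realFieldType) (X Y : finType)
  (dX : X -> X -> R) (dY : Y -> Y -> R)
  (hX : is_metric dX) (hY : is_metric dY)
  (psi : X -> Y) (D : R) (hD : 0 <= D)
  (hdense : dense_in dY (psi @: [set: X]) D)
  (B : {set Y}) (hB : B != set0) :
  (#|psi @^-1: B|%:R : R) >=
    #|B|%:R * (1 / (NY dY D)%:R) *
      (1 - #|inner_boundary dY D B|%:R / #|B|%:R).
Proof.
have hc := @count_part R X Y dY hY psi D hdense B.
have bsub : inner_boundary dY D B \subset B.
  by apply/subsetP => y; rewrite inE => /andP[].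
rewrite cardsDS // in hc.
have Bpos : (0 < #|B|)%N by rewrite card_gt0.
have Bpos' : (#|B|%:R : R) != 0 by rewrite pnatr_eq0 -lt0n.
case N0 : (NY dY D == 0)%N.
  rewrite (eqP N0) div1r invr0 mulr0 mul0r; exact: ler0n.
have Np : (0 : R) < (NY dY D)%:R by rewrite ltr0n lt0n N0.
have E : #|B|%:R * (1 / (NY dY D)%:R) *
      (1 - #|inner_boundary dY D B|%:R / #|B|%:R)
    = ((#|B| - #|inner_boundary dY D B|)%N%:R : R) / (NY dY D)%:R.
  rewrite natrB ?subset_leq_card //. field.
  by rewrite Bpos' gt_eqF.
rewrite E ler_pdivrMr // -natrM ler_nat; exact: hc.
Qed.
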